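(* Let $(E,d)$ be a metric space with a Borel probability measure $\mu$, let $k\geq1$ and $\alpha_k:[0,\infty)\to[0,\infty)$, and assume $(E,d,\mu)$ satisfies the multi-set concentration of measure property of order $k$ with concentration profile $\alpha_k$. Let $f:E\to\mathbb{R}$ be $1$-Lipschitz, and let $A_1,\ldots,A_k$ be Borel subsets of $E$ with $(\mu(A_1),\ldots,\mu(A_k))\in\Delta_k$; set $A=A_1\cup\cdots\cup A_k$. Then for any $1$-Lipschitz function $g:E\to\mathbb{R}$ with $g=f$ on $A$, \[ \mu(|f-g|\geq r)\leq(1-\mu(A))\,\alpha_k(r/2),\qquad\forall\,0<r\leq\min_{i\neq j}d(A_i,A_j). \]
   Context: For $A,B\subset E$, $d(A,B)=\inf\{d(x,y):x\in A,y\in B\}$ and for $r>0$, $A_r=\{x\in E:\exists y\in A,\ d(x,y)<r\}$. $\Delta_k$ is the set of $(a_1,\ldots,a_k)\in[0,1]^k$ with $\sum_ja_j\leq1$ and $a_i+\sum_ja_j\geq1$ for every $i$. $(E,d,\mu)$ satisfies the multi-set concentration of measure property of order $k$ with profile $\alpha_k$ if for all Borel sets $A_1,\ldots,A_k\subset E$ with $(\mu(A_1),\ldots,\mu(A_k))\in\Delta_k$, the set $A=A_1\cup\cdots\cup A_k$ satisfies $\mu(A_r)\geq1-(1-\mu(A))\alpha_k(r)$ for all $0<r\leq\frac12\min_{i\neq j}d(A_i,A_j)$. *)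

(* Defs.v *)
From HB Require Import structures.
From mathcomp Require Import all_boot all_order all_algebra.
From mathcomp Require Import all_classical all_reals all_analysis.
Set Implicit Arguments. Unset Strict Implicit. Unset Printing Implicit Defensive.
Import Order.TTheory GRing.Theory Num.Theory.
Local Open Scope classical_set_scope.
Local Open Scope ring_scope.

Section MetricDefs.
Context {R : realType} {E : Type}.

Definition is_metric (dist : E -> E -> R) : Prop :=
  [/\ forall x y, dist x y = 0 <-> x = y,
      forall x y, dist x y = dist y x &
      forall x y z, dist x z <= dist x y + dist y z].

Definition dopen (dist : E -> E -> R) (U : set E) : Prop :=
  forall x, U x -> exists2 e : R, 0 < e & forall y, dist x y < e -> U y.

(* d(A,B) = inf { d(x,y) : x in A, y in B }, an extended real (+oo if A or B empty) *)
Definition setdist (dist : E -> E -> R) (A B : set E) : \bar R :=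
  ereal_inf [set (dist xy.1 xy.2)%:E | xy in A `*` B].

Definition enlarge (dist : E -> E -> R) (A : set E) (r : R) : set E :=
  [set x | exists2 y, A y & dist x y < r].

Definition lipschitz1 (dist : E -> E -> R) (f : E -> R) : Prop :=
  forall x y, `|f x - f y| <= dist x y.

End MetricDefs.

Definition inDelta {R : realType} (k : nat) (a : 'I_k -> \bar R) : Prop :=
  [/\ forall i, (0 <= a i /\ a i <= 1)%E,
      (\sum_(j < k) a j <= 1)%E &
      forall i, (1 <= a i + \sum_(j < k) a j)%E].

Definition multiset_concentration {d : measure_display} {E : measurableType d}
  {R : realType} (dist : E -> E -> R) (mu : probability E R) (k : nat)
  (alpha : R -> R) : Prop :=
  forall A : 'I_k -> set E,
    (forall i, measurable (A i)) ->
    inDelta (fun i => mu (A i)) ->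
    let U := \bigcup_(i in [set: 'I_k]) A i in
    forall r : R, 0 < r ->
      (forall i j, i != j -> (r%:E <= (2^-1)%:E * setdist dist (A i) (A j))%E) ->
      (1 - (1 - mu U) * (alpha r)%:E <= mu (enlarge dist U r))%E.

(* Main.v *)
Require Import Defs.
From HB Require Import structures.
From mathcomp Require Import all_boot all_order all_algebra.
From mathcomp Require Import all_classical all_reals all_analysis.
From mathcomp Require Import lra ring.
Import Order.TTheory GRing.Theory Num.Theory.
Local Open Scope classical_set_scope.
Local Open Scope ring_scope.

Theorem proposition4p3 (d : measure_display) (E : measurableType d)
  (R : realType) (dist : E -> E -> R) (mu : probability E R)
  (k : nat) (alpha : R -> R) :
  is_metric dist ->
  (* the sigma-algebra of E is the Borel sigma-algebra of (E, dist) *)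
  @measurable d E = <<s [set U | dopen dist U] >> ->
  (0 < k)%N ->
  (forall r, 0 <= r -> 0 <= alpha r) ->
  multiset_concentration dist mu k alpha ->
  forall f : E -> R, lipschitz1 dist f ->
  forall A : 'I_k -> set E,
    (forall i, measurable (A i)) ->
    inDelta (fun i => mu (A i)) ->
  forall g : E -> R, lipschitz1 dist g ->
    (forall x, (\bigcup_(i in [set: 'I_k]) A i) x -> g x = f x) ->
  forall r : R, 0 < r ->
    (forall i j, i != j -> (r%:E <= setdist dist (A i) (A j))%E) ->
    (mu [set x | (r <= `|f x - g x|)%R]
       <= (1 - mu (\bigcup_(i in [set: 'I_k]) A i)) * (alpha (r / 2))%:E)%E.
Proof.
move=> [d0 dsym dtri] hmeas k0 alpha0 hconc f hf A hA hD g hg hfg r r0 hsep.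
set U := \bigcup_(i in [set: 'I_k]) A i.
have openM : forall V : set E, dopen dist V -> measurable V.
  by move=> V hV; rewrite hmeas; apply: sub_sigma_algebra.
clear hmeas.
have r20 : 0 < r / 2 by rewrite divr_gt0.
set Ar := enlarge dist U (r / 2).
have mAr : measurable Ar.
  apply: openM => x [y Uy dxy].
  exists (r / 2 - dist x y); first by rewrite subr_gt0.
  move=> z dxz; exists y => //.
  have := dtri z x y; rewrite (dsym z x) => h.
  by apply: le_lt_trans h _; rewrite -ltrBrDr.
set B := [set x | (r <= `|f x - g x|)%R].
have mB : measurable B.
  have -> : B = ~` [set x | `|f x - g x| < r].
    rewrite /B; apply/seteqP; split => x /= h; [by move=> h'; lra | by rewrite leNgt; apply/negP].
  apply: measurableC; apply: openM => x /= hx.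
  exists ((r - `|f x - g x|) / 2); first by rewrite divr_gt0 // subr_gt0.
  move=> z dxz.
  have h1 := hf z x; have h2 := hg z x; rewrite (dsym z x) in h1 h2.
  have h3 : `|f z - g z| <= `|f x - g x| + `|f z - f x| + `|g z - g x|.
    have -> : f z - g z = (f x - g x) + (f z - f x) - (g z - g x) by ring.
    by apply: le_trans (ler_normB _ _) _; rewrite lerD // ler_normD.
  apply: le_lt_trans h3 _.
  have : dist x z * 2 < r - `|f x - g x| by rewrite -ltr_pdivlMr.
  by move=> h4; lra.
have BAr : B `<=` ~` Ar.
  move=> x; rewrite /B /= => hx [y Uy dxy].
  have h1 := hf x y; have h2 := hg x y.
  have h3 : `|f x - g x| <= `|f x - f y| + `|g x - g y|.
    have -> : f x - g x = (f x - f y) - (g x - g y) by rewrite (hfg y Uy); ring.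
    exact: ler_normB.
  lra.
have hc := hconc A hA hD (r / 2) r20.
have hc' : (1 - (1 - mu U) * (alpha (r / 2))%:E <= mu Ar)%E.
  apply: hc => i j ij.
  have := hsep i j ij; case: (setdist dist (A i) (A j)) => [s| |] //=.
  - by rewrite -EFinM !lee_fin => h; lra.
  - move=> _; rewrite gt0_muley ?lte_fin ?invr_gt0 ?leey //.
have mU : measurable U by apply: fin_bigcup_measurable => // i _; exact: hA.
have hB : (mu B <= 1 - mu Ar)%E.
  rewrite -(probability_setC mu mAr).
  exact: (le_measure mu (mem_set mB) (mem_set (measurableC mAr)) BAr).
apply: le_trans hB _.
have fAr : mu Ar \is a fin_num by exact: fin_num_measure.
have fU : mu U \is a fin_num by exact: fin_num_measure.
have fX : ((1 - mu U) * (alpha (r / 2))%:E)%E \is a fin_num.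
  by rewrite fin_numM // fin_numB fU.
rewrite leeBlDl //; move: hc'; rewrite leeBlDr // addeC.
Qed.
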